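(* Let $X$ and $\Lambda$ be finite sets; for each $\lambda\in\Lambda$ let $G_\lambda$ be a finite group and $\rho_\lambda\colon X\to G_\lambda^\sharp$ a map. Let $\mathcal Z$ be a set of subsets of $\Lambda$. Let $\Delta(X,\rho,\mathcal Z)\ge0$ be the least real number such that \[\sum_{D\in\mathcal Z}\sum_{\chi\in\operatorname{Prim}(G_D)}\Big|\sum_{v\in X}a_v\chi(\rho_D(v))\Big|^2\le\Delta(X,\rho,\mathcal Z)\sum_{v\in X}|a_v|^2\] for every sequence $(a_v)_{v\in X}$ of complex numbers. Let $\mathscr S\subseteq X$, and for each $\lambda\in\Lambda$ fix a real number $0<\delta_\lambda\le1$ with $\mu_\lambda(\rho_\lambda(\mathscr S))\le\delta_\lambda$. Define \[L(\mathcal Z)=\sum_{D\in\mathcal Z}\prod_{\lambda\in D}\frac{1-\delta_\lambda}{\delta_\lambda}.\] Then $L(\mathcal Z)\,|\mathscr S|\le\Delta(X,\rho,\mathcal Z)$.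
   Context: For a finite group $G$, $G^\sharp$ denotes its set of conjugacy classes and $\operatorname{Irr}(G)$ the set of characters of irreducible complex representations of $G$. $\mu_\lambda$ is the probability measure on $G_\lambda^\sharp$ given by $\mu_\lambda(U)=|G_\lambda|^{-1}\sum_{C\in U}|C|$ for $U\subseteq G_\lambda^\sharp$. For $D\subseteq\Lambda$, $G_D=\prod_{\lambda\in D}G_\lambda$ (with $G_\emptyset$ trivial), and $\rho_D\colon X\to G_D^\sharp$ sends $v$ to the conjugacy class $\prod_{\lambda\in D}\rho_\lambda(v)$. For $E\subseteq D$, composition with the projection $G_D\to G_E$ gives an injection $\operatorname{Irr}(G_E)\hookrightarrow\operatorname{Irr}(G_D)$; a character $\chi\in\operatorname{Irr}(G_D)$ is imprimitive if it comes from $\operatorname{Irr}(G_E)$ for some proper subset $E\subsetneq D$, and primitive otherwise. $\operatorname{Prim}(G_D)$ is the set of primitive characters in $\operatorname{Irr}(G_D)$ (so $\operatorname{Prim}(G_\emptyset)=\{1\}$). Characters are evaluated on conjugacy classes in the obvious way. *)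

(* Defs.v *)
From HB Require Import structures.
From mathcomp Require Import all_boot all_order all_algebra all_fingroup all_solvable all_field all_character.
Set Implicit Arguments. Unset Strict Implicit. Unset Printing Implicit Defensive.
Import Order.TTheory GRing.Theory Num.Theory.
Local Open Scope ring_scope.

(* For D : {set L}, G_D is realised
   as the subgroup of elements supported on D, i.e. prod_{l in D} G_l. *)

Section Prod.
Variables (L : finType) (gT : L -> finGroupType).

Definition GDfactor (D : {set L}) (l : L) : {group gT l} :=
  if l \in D then [set: gT l]%G else 1%G.

Definition GD (D : {set L}) : {group {dffun forall l, gT l}} :=
  setXn_group (GDfactor D).

Definition projD (E : {set L}) (x : {dffun forall l, gT l})
  : {dffun forall l, gT l} :=
  finfun (fun l => if l \in E then x l else 1%g).

Definition imprimitive_char (D : {set L}) (i : Iirr (GD D)) : bool :=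
  [exists E : {set L}, (E \proper D) &&
    [exists j : Iirr (GD E),
      [forall x in GD D, 'chi_i x == 'chi_j (projD E x)]]].

Definition primitive_char (D : {set L}) (i : Iirr (GD D)) : bool :=
  ~~ imprimitive_char i.

Variables (X : finType) (rho : forall l, X -> {set gT l}).

Definition rhoD (D : {set L}) (v : X) : {set {dffun forall l, gT l}} :=
  [set x in GD D | [forall l, (l \in D) ==> (x l \in rho l v)]].

Definition cfclass_val (G : {group {dffun forall l, gT l}}) (phi : 'CF(G))
  (C : {set {dffun forall l, gT l}}) : algC := phi (repr C).

Definition mu (l : L) (U : {set {set gT l}}) : algC :=
  (#|[set: gT l]|%:R)^-1 * \sum_(C in U) (#|C|%:R).

End Prod.
Arguments imprimitive_char {L gT D} i.
Arguments primitive_char {L gT D} i.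

(* Main.v *)
Require Import Defs.
From HB Require Import structures.
From mathcomp Require Import all_boot all_order all_algebra all_fingroup all_solvable all_field all_character.
From mathcomp Require Import ring.
Import Order.TTheory GRing.Theory Num.Theory.
Local Open Scope ring_scope.

Module Helpers.
Set Implicit Arguments. Unset Strict Implicit. Unset Printing Implicit Defensive.

Lemma big_setXn_prod (R : comRingType) (I : finType) (fT : I -> finType)
  (A : forall i, {set fT i}) (f : forall i, fT i -> R) :
  \sum_(x in setXn A) \prod_i f i (x i) = \prod_i \sum_(y in A i) f i y.
Proof.
pose J := {i : I & fT i}.
pose phi (j : J) := f (tag j) (tagged j).
pose Q (i : I) : pred J := fun j => (tag j == i) && (tagged j \in A (tag j)).
have step1 i : \sum_(y in A i) f i y = \sum_(j | Q i j) phi j.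
  rewrite -[LHS](big_imset phi (h := Tagged fT)) /=; last first.
    by move=> y1 y2 _ _; apply: eq_from_Tagged.
  apply: eq_bigl => j; apply/imsetP/idP => [[y Hy ->]|].
    by rewrite /Q /= eqxx Hy.
  case: j => l y /andP [/= /eqP el Hy]; subst l; by exists y.
under eq_bigr do rewrite step1.
rewrite bigA_distr_big_dep.
pose h (x : {dffun forall i, fT i}) : {ffun I -> J} := [ffun i => Tagged fT (x i)].
have hinj : injective h.
  move=> x1 x2 /ffunP E; apply/ffunP => i; have := E i; rewrite !ffunE.
  exact: eq_from_Tagged.
transitivity (\sum_(g in h @: setXn A) \prod_i phi (g i)).
  rewrite big_imset /=; last by move=> x1 x2 _ _; apply: hinj.
  by apply: eq_bigr => x _; apply: eq_bigr => i _; rewrite /phi ffunE.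
apply: eq_bigl => g.
apply/imsetP/familyP => [[x Hx ->] i|Hg].
  by rewrite /h ffunE unfold_in /= eqxx (setXnP Hx).
have He i : tag (g i) = i by case/andP: (Hg i) => /eqP.
exists ([ffun i => etagged (He i)] : {dffun forall i, fT i}).
  apply/setXnP => i; rewrite ffunE; case/andP: (Hg i) => _.
  move: (He i); case: (g i) => l y /= e; by case: _ / e.
by apply/ffunP => i; rewrite /h !ffunE etaggedK.
Qed.


Section Grp.
Variables (L : finType) (gT : L -> finGroupType).
Local Notation GT := {dffun forall l, gT l}.

Lemma mem_GD D (x : GT) : (x \in GD gT D) = [forall l, x l \in GDfactor gT D l].
Proof. by rewrite /GD /= in_setXn. Qed.

Lemma GDfactor_in (D : {set L}) l : l \in D -> GDfactor gT D l = [set: gT l]%G.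
Proof. by rewrite /GDfactor => ->. Qed.

Lemma GDfactor_out (D : {set L}) l : l \notin D -> GDfactor gT D l = 1%G.
Proof. by rewrite /GDfactor => /negPf ->. Qed.

Lemma conjg_ffun (x y : GT) l : (x ^ y)%g l = (x l ^ y l)%g.
Proof. by rewrite /conjg !mulg_ffun invg_ffun. Qed.

Variable g : forall l, gT l -> algC.
Hypothesis gJ : forall l (y z : gT l), g (y ^ z)%g = g y.

Definition fD D (x : GT) : algC :=
  if x \in GD gT D then \prod_(l in D) g (x l) else 0.

Lemma fD_class D : is_class_fun <<GD gT D>>%g (finfun (fD D)).
Proof.
rewrite genGid; apply: intro_class_fun => [x y Gx Gy|x nGx]; last first.
  by rewrite /fD (negPf nGx).
rewrite /fD groupJ // Gx; apply: eq_bigr => l _; by rewrite conjg_ffun gJ.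
Qed.

Definition FD D : 'CF(GD gT D) := Cfun 0 (fD_class D).

Lemma FDE D x : FD D x = fD D x.
Proof. exact: cfunE. Qed.


Lemma sum_GD D (F : GT -> algC) :
  \sum_(x in GD gT D) F x = \sum_(x in setXn (fun l => GDfactor gT D l : {set _})) F x.
Proof. by []. Qed.

Lemma card_GD D : #|GD gT D| = \prod_(l in D) #|[set: gT l]|.
Proof.
rewrite /GD /= cardsXn [RHS]big_mkcond /=; apply: eq_bigr => l _.
by case: ifP => lD; rewrite /GDfactor lD // cards1.
Qed.

Lemma prod_setXn D (h : forall l, gT l -> algC) :
  \sum_(x in GD gT D) \prod_(l in D) h l (x l) = \prod_(l in D) \sum_y h l y.
Proof.
rewrite sum_GD.
transitivity (\sum_(x in setXn (fun l => GDfactor gT D l : {set _}))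
   \prod_l (fun l y => if l \in D then h l y else 1) l (x l)).
  by apply: eq_bigr => x _; rewrite big_mkcond.
rewrite (big_setXn_prod (fun l => GDfactor gT D l : {set _}) (fun l y => if l \in D then h l y else 1)) [RHS]big_mkcond /=; apply: eq_bigr => l _.
case: ifP => lD; rewrite /GDfactor lD /=.
  by apply: eq_bigl => y; rewrite inE.
by rewrite sumr_const cards1.
Qed.

Lemma FD_norm D : '[FD D] =
  \prod_(l in D) (#|[set: gT l]|%:R^-1 * \sum_(y : gT l) g y * (g y)^*).
Proof.
rewrite cfdotE.
rewrite (eq_bigr (fun x => fD D x * (fD D x)^*)); last by move=> x _; rewrite FDE.
rewrite (eq_bigr (fun x : GT => \prod_(l in D) (g (x l) * (g (x l))^*))); last first.
  by move=> x Gx; rewrite /fD Gx rmorph_prod -big_split.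
rewrite (prod_setXn D (fun l (y : gT l) => g y * (g y)^*)) big_split /= card_GD natr_prod prodfV //.
Qed.


Lemma dfung1_GD (D : {set L}) l (y : gT l) : l \in D -> dfung1 y \in GD gT D.
Proof.
move=> lD; rewrite mem_GD; apply/forallP => l'.
have [<-|nl] := eqVneq l l'; first by rewrite dfung1_id GDfactor_in // inE.
by rewrite dfung1_dflt // group1.
Qed.

Hypothesis g0 : forall l, \sum_(y : gT l) g y = 0.

Lemma FD_imprim (D : {set L}) (i : Iirr (GD gT D)) : imprimitive_char i -> '[FD D, 'chi_i] = 0.
Proof.
case/existsP => E /andP [pED /existsP [j /forallP Hj]].
have [sED [l lD lE]] := properP pED.
pose Phi (x : GT) := fD D x * ('chi_j (projD E x))^*.
rewrite cfdotE (eq_bigr (fun x : GT => Phi x)); last first.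
  by move=> x Gx; rewrite FDE /Phi; move/implyP: (Hj x) => /(_ Gx) /eqP ->.
suff -> : \sum_(x in GD gT D) Phi x = 0 by rewrite mulr0.
have -> : \sum_(x in GD gT D) Phi x = \sum_x Phi x.
  rewrite big_mkcond; apply: eq_bigr => x _; case: ifP => // nG.
  by rewrite /Phi /fD nG mul0r.
have N0 : (#|gT l|%:R : algC) != 0.
  by rewrite pnatr_eq0 -lt0n; apply/card_gt0P; exists 1%g.
apply: (mulfI N0); rewrite mulr0 mulr_natl -sumr_const /=.
rewrite (eq_bigr (fun y : gT l => \sum_x Phi (x * dfung1 y)%g)); last first.
  by move=> y _; rewrite (reindex_inj (mulIg (dfung1 y))).
rewrite exchange_big /=; apply: big1 => x _.
have eG (y : gT l) : dfung1 y \in GD gT D by apply: dfung1_GD.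
have [Gx|nGx] := boolP (x \in GD gT D); last first.
  by apply: big1 => y _; rewrite /Phi /fD groupMr ?eG // (negPf nGx) mul0r.
transitivity (\sum_(y : gT l) g (x l * y)%g *
   ((\prod_(l' in D | l' != l) g (x l')) * ('chi_j (projD E x))^*)).
  apply: eq_bigr => y _; rewrite /Phi /fD groupMr ?eG // Gx (bigD1 l lD) /= mulrA.
  congr (_ * _ * _).
  - by rewrite mulg_ffun dfung1_id.
  - apply: eq_bigr => l' /andP [_ nl]; rewrite mulg_ffun dfung1_dflt ?mulg1 //.
    by rewrite eq_sym.
  - congr (_^*); congr ('chi_j _); apply/ffunP => l'; rewrite !ffunE.
    case: ifP => // l'E; rewrite dfwith_out ?mulg1 //.
    by apply: contraNneq lE => ->.
rewrite -mulr_suml.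
have -> : \sum_(y : gT l) g (x l * y)%g = \sum_(y : gT l) g y.
  by symmetry; apply: (@reindex_inj _ _ _ _ _ xpredT); apply: mulgI.
by rewrite g0 mul0r.
Qed.

End Grp.

Section Factor.
Variables (G : finGroupType) (th : {set G}).
Hypothesis th0 : th != set0.
Local Notation N := (#|[set: G]|%:R : algC).
Definition mf : algC := #|th|%:R / N.
Definition gf (y : G) : algC := ((y \in th)%:R - mf) / mf.

Lemma N_neq0 : N != 0.
Proof. by rewrite pnatr_eq0 -lt0n; apply/card_gt0P; exists 1%g; rewrite inE. Qed.

Lemma t_neq0 : (#|th|%:R : algC) != 0.
Proof. by rewrite pnatr_eq0 cards_eq0. Qed.

Lemma mf_gt0 : 0 < mf.
Proof.
apply: divr_gt0; first by rewrite ltr0n lt0n cards_eq0 th0.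
by rewrite ltr0n; apply/card_gt0P; exists 1%g; rewrite inE.
Qed.

Lemma sum_ind : \sum_(y : G) ((y \in th)%:R : algC) = #|th|%:R.
Proof.
rewrite -sum1_card natr_sum [RHS]big_mkcond /=; apply: eq_bigr => y _.
by case: ifP.
Qed.

Lemma sum_cst (c : algC) : \sum_(y : G) c = N * c.
Proof. by rewrite sumr_const cardsT mulr_natl. Qed.

Lemma gf_sum : \sum_y gf y = 0.
Proof.
rewrite -mulr_suml sumrB sum_ind sum_cst /mf.
have := N_neq0; have := t_neq0; move: (#|th|%:R : algC) N => t n t0 n0.
by field; rewrite n0 t0.
Qed.

Lemma gf_conj y : (gf y)^* = gf y.
Proof. by rewrite /gf /mf fmorph_div rmorphB fmorph_div !rmorph_nat. Qed.

Lemma gf_norm : N^-1 * \sum_(y : G) gf y * (gf y)^* = (1 - mf) / mf.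
Proof.
under eq_bigr => y _ do rewrite gf_conj.
have E y : gf y * gf y = (y \in th)%:R * ((1 - 2 * mf) / mf ^+ 2) + 1.
  have m0 : mf != 0 by rewrite gt_eqF // mf_gt0.
  rewrite /gf; case: (y \in th) => /=; by field.
under eq_bigr => y _ do rewrite E.
rewrite big_split /= -mulr_suml sum_ind sum_cst /mf.
have := N_neq0; have := t_neq0; move: (#|th|%:R : algC) N => t n t0 n0.
by field; rewrite n0 t0.
Qed.

Lemma gf_in y : y \in th -> gf y = (1 - mf) / mf.
Proof. by rewrite /gf => ->. Qed.

End Factor.

End Helpers.
Import Helpers.

Lemma amgm (p q s : algC) : 0 < s ->
  `|p * q| <= (s * `|p| ^+ 2 + s^-1 * `|q| ^+ 2) / 2.
Proof.
move=> s0.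
have sr : s \is Num.real by rewrite gtr0_real.
have r : s * `|p| - `|q| \is Num.real by rewrite rpredB ?rpredM ?normr_real.
have h : 0 <= `|s * `|p| - `|q| | ^+ 2 / s by apply: divr_ge0; [exact: exprn_ge0 (normr_ge0 _) | exact: ltW].
rewrite real_normK // in h.
rewrite ler_pdivlMr ?ltr0n // -subr_ge0 normrM.
have -> : (s * `|p| ^+ 2 + s^-1 * `|q| ^+ 2 - `|p| * `|q| * 2) =
          (s * `|p| - `|q|) ^+ 2 / s.
  have s0' : s != 0 by rewrite gt_eqF.
  by field.
exact: h.
Qed.

Lemma class_memJ (gT : finGroupType) (C : {set gT}) (y z : gT) :
  C \in classes [set: gT] -> ((y ^ z)%g \in C) = (y \in C).
Proof.
case/imsetP => x _ ->; apply: memJ_norm.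
by apply: (subsetP (class_norm _ _)); rewrite inE.
Qed.

Lemma class_nonempty (gT : finGroupType) (C : {set gT}) :
  C \in classes [set: gT] -> repr C \in C.
Proof. by case/imsetP => x _ ->; apply: (mem_repr x); apply: class_refl. Qed.

Theorem theorem2p1 (X L : finType) (gT : L -> finGroupType)
  (rho : forall l, X -> {set gT l})
  (hrho : forall l v, rho l v \in classes [set: gT l])
  (Z : {set {set L}})
  (Delta : algC)
  (hDelta_bound : forall a : X -> algC,
     \sum_(D in Z) \sum_(i : Iirr (GD gT D) | primitive_char i)
        `| \sum_(v : X) a v * cfclass_val 'chi_i (rhoD rho D v) | ^+ 2
     <= Delta * \sum_(v : X) `|a v| ^+ 2)
  (hDelta_least : forall Delta' : algC, 0 <= Delta' ->
     (forall a : X -> algC,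
       \sum_(D in Z) \sum_(i : Iirr (GD gT D) | primitive_char i)
          `| \sum_(v : X) a v * cfclass_val 'chi_i (rhoD rho D v) | ^+ 2
       <= Delta' * \sum_(v : X) `|a v| ^+ 2) ->
     Delta <= Delta')
  (hDelta0 : 0 <= Delta)
  (S : {set X}) (delta : L -> algC)
  (hdelta : forall l, 0 < delta l <= 1)
  (hmu : forall l, mu [set rho l v | v in S] <= delta l) :
  (\sum_(D in Z) \prod_(l in D) ((1 - delta l) / delta l)) * #|S|%:R <= Delta.
Proof.
have [S0|[v0 v0S]] := set_0Vmem S.
  by rewrite S0 cards0 mulr0.
pose th l : {set gT l} := cover [set rho l v | v in S].
have th0 l : th l != set0.
  apply/set0Pn; exists (repr (rho l v0)); apply/bigcupP; exists (rho l v0).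
    exact: imset_f.
  exact: class_nonempty.
have thJ l (y z : gT l) : ((y ^ z)%g \in th l) = (y \in th l).
  apply/bigcupP/bigcupP => -[C CS H]; exists C => //; move: H;
  by case/imsetP: CS => v _ ->; rewrite (class_memJ _ _ _ _ (hrho l v)).
pose g : forall l, gT l -> algC := fun l => gf (th l).
have gJ : forall l (y z : gT l), g l (y ^ z)%g = g l y.
  by move=> l y z; rewrite /g /gf thJ.
have g0 : forall l, \sum_(y : gT l) g l y = 0.
  by move=> l; apply: gf_sum (th0 l).
pose m l := mf (th l).
have mu_m l : mu [set rho l v | v in S] = m l.
  rewrite /mu /m /mf mulrC; congr (_ / _).
  have tI : trivIset [set rho l v | v in S].
    apply: (@trivIsetS _ _ (classes [set: gT l])).
      by apply/subsetP => C /imsetP [v _ ->]; apply: hrho.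
    by case/and3P: (classes_partition [set: gT l]).
  by rewrite /th -(eqP tI) natr_sum.
have m_pos l : 0 < m l by apply: mf_gt0 (th0 l).
have m_le l : m l <= delta l by rewrite -mu_m.
pose P (D : {set L}) := \prod_(l in D) ((1 - m l) / m l).
pose F D := FD gJ D.
pose c D (i : Iirr (GD gT D)) := '[F D, 'chi_i].
pose a v : algC := (v \in S)%:R.
pose T D (i : Iirr (GD gT D)) :=
  \sum_(v : X) a v * cfclass_val 'chi_i (rhoD rho D v).
have FP (D : {set L}) : '[F D] = P D.
  rewrite /F FD_norm; apply: eq_bigr => l _; rewrite /g; exact: gf_norm (th0 l).
have H1 : \sum_(D in Z) \sum_(i : Iirr (GD gT D) | primitive_char i) `|c D i| ^+ 2
    <= \sum_(D in Z) P D.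
  apply: ler_sum => D _; rewrite -FP cfdot_sum_irr.
  under [X in _ <= X]eq_bigr do rewrite -normCK.
  rewrite [X in _ <= X](bigID primitive_char) /= lerDl.
  by apply: sumr_ge0 => i _; exact: exprn_ge0 (normr_ge0 _).
have H2 : \sum_(D in Z) \sum_(i : Iirr (GD gT D) | primitive_char i) `|T D i| ^+ 2
    <= Delta * #|S|%:R.
  have := hDelta_bound a.
  have -> // : \sum_(v : X) `|a v| ^+ 2 = #|S|%:R.
  rewrite -sum1_card natr_sum [RHS]big_mkcond; apply: eq_bigr => v _.
  by rewrite /a; case: (v \in S); rewrite ?normr1 ?normr0 ?expr1n ?expr0n.
have Fval (D : {set L}) v : v \in S -> F D (repr (rhoD rho D v)) = P D.
  move=> vS.
  have w_in : (finfun (fun l => if l \in D then repr (rho l v) else 1%g)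
      : {dffun forall l, gT l}) \in rhoD rho D v.
    rewrite /rhoD inE; apply/andP; split.
      rewrite mem_GD; apply/forallP => l; rewrite ffunE; case: ifP => lD.
        by rewrite GDfactor_in // inE.
      by rewrite GDfactor_out ?lD // group1.
    apply/forallP => l; apply/implyP => lD; rewrite ffunE lD.
    exact: class_nonempty.
  have := mem_repr _ w_in; set r := repr _; rewrite /rhoD inE => /andP [rG /forallP rl].
  rewrite /F FDE /fD rG; apply: eq_bigr => l lD; rewrite /g gf_in //.
  apply/bigcupP; exists (rho l v); first exact: imset_f.
  exact: (implyP (rl l) lD).
have H3 : \sum_(D in Z) \sum_(i : Iirr (GD gT D) | primitive_char i) c D i * T D i
    = #|S|%:R * \sum_(D in Z) P D.
  rewrite mulr_sumr; apply: eq_bigr => D _.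
  transitivity (\sum_(i : Iirr (GD gT D)) c D i * T D i).
    rewrite [RHS](bigID primitive_char) /= [X in _ + X]big1 ?addr0 //.
    by move=> i; rewrite /primitive_char negbK => Hi; rewrite /c (FD_imprim gJ g0 Hi) mul0r.
  rewrite /T; under eq_bigr => i _ do rewrite mulr_sumr.
  rewrite exchange_big /=.
  transitivity (\sum_(v : X) a v * F D (repr (rhoD rho D v))).
    apply: eq_bigr => v _; rewrite {1}(cfun_sum_cfdot (F D)) sum_cfunE mulr_sumr.
    by apply: eq_bigr => i _; rewrite cfunE /c /cfclass_val mulrCA.
  rewrite -sum1_card natr_sum mulr_suml [RHS]big_mkcond /=.
  apply: eq_bigr => v _; rewrite /a; case: ifP => vS.
    by rewrite Fval // !mul1r.
  by rewrite !mul0r.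
have Lm0 : 0 <= \sum_(D in Z) P D.
  apply: sumr_ge0 => D _; apply: prodr_ge0 => l _; apply: divr_ge0.
    by rewrite subr_ge0; apply: le_trans (m_le l) _; case/andP: (hdelta l).
  exact: ltW.
have Lle : \sum_(D in Z) \prod_(l in D) ((1 - delta l) / delta l)
    <= \sum_(D in Z) P D.
  apply: ler_sum => D _; apply: ler_prod => l _; case/andP: (hdelta l) => d0 d1.
  apply/andP; split.
    by apply: divr_ge0; [rewrite subr_ge0 | exact: ltW].
  rewrite !mulrBl !mul1r !divff ?gt_eqF // ?m_pos // lerD2r.
  by rewrite lef_pV2 ?posrE ?m_pos.
have s0 : 0 < (#|S|%:R : algC) by rewrite ltr0n; apply/card_gt0P; exists v0.
move: H1 H2 H3 s0 Lm0 Lle.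
move: (#|S|%:R : algC) (\sum_(D in Z) P D) => s Lm H1 H2 H3 s0 Lm0 Lle.
suff key : s * Lm <= Delta.
  apply: le_trans key; rewrite mulrC; apply: ler_wpM2l => //; exact: ltW.
have step1 : s * Lm <= \sum_(D in Z) \sum_(i : Iirr (GD gT D) | primitive_char i)
     `|c D i * T D i|.
  have e : s * Lm = `|s * Lm| by rewrite ger0_norm // mulr_ge0 // ltW.
  rewrite e -H3; apply: le_trans (ler_norm_sum _ _ _) _.
  by apply: ler_sum => D _; exact: ler_norm_sum.
have step2 : \sum_(D in Z) \sum_(i : Iirr (GD gT D) | primitive_char i)
     `|c D i * T D i| <= \sum_(D in Z) \sum_(i : Iirr (GD gT D) | primitive_char i)
     ((s * `|c D i| ^+ 2 + s^-1 * `|T D i| ^+ 2) / 2).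
  by apply: ler_sum => D _; apply: ler_sum => i _; exact: amgm.
have step3 : \sum_(D in Z) \sum_(i : Iirr (GD gT D) | primitive_char i)
     ((s * `|c D i| ^+ 2 + s^-1 * `|T D i| ^+ 2) / 2) =
   (s * \sum_(D in Z) \sum_(i : Iirr (GD gT D) | primitive_char i) `|c D i| ^+ 2
    + s^-1 * \sum_(D in Z) \sum_(i : Iirr (GD gT D) | primitive_char i) `|T D i| ^+ 2) / 2.
  under eq_bigr => D _ do rewrite -mulr_suml.
  rewrite -mulr_suml; congr (_ / _).
  rewrite !mulr_sumr -big_split; apply: eq_bigr => D _.
  by rewrite big_split /= !mulr_sumr.
have step4 : (s * \sum_(D in Z) \sum_(i : Iirr (GD gT D) | primitive_char i) `|c D i| ^+ 2
    + s^-1 * \sum_(D in Z) \sum_(i : Iirr (GD gT D) | primitive_char i) `|T D i| ^+ 2) / 2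
    <= (s * Lm + Delta) / 2.
  apply: ler_wpM2r; first by rewrite invr_ge0 ler0n.
  apply: lerD; first by apply: ler_wpM2l => //; exact: ltW.
  apply: le_trans (_ : s^-1 * (Delta * s) <= _).
    by apply: ler_wpM2l => //; rewrite invr_ge0 ltW.
  by rewrite mulrCA mulVf ?mulr1 // gt_eqF.
rewrite step3 in step2.
have := le_trans step1 (le_trans step2 step4).
by rewrite ler_pdivlMr ?ltr0n // mulr_natr mulr2n lerD2l.
Qed.
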